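(* Let $IS\in\{\Box,\blacksquare\}^2$ be any initial store and let $\tau$ be a correct compositional translation from $\mathrm{SYNCSIMPLE}$ into $\mathrm{LOCKSIMPLE}_{2,IS}$ of blocking type $(P_1P_1,P_2P_2)$. Then $\tau(!)$ has no prefix in $T_1^+T_2$ and no prefix in $T_2^+T_1$.
   Context: $\mathrm{SYNCSIMPLE}$: subprocesses $\mathcal{U} ::= \checkmark \mid 0 \mid\, !\mathcal{U} \mid\, ?\mathcal{U}$; processes are finite parallel compositions ($\mid$ associative, commutative, $0$ a unit). Reduction: $!\mathcal{U}_1\mid ?\mathcal{U}_2\mid \mathcal{P}\to \mathcal{U}_1\mid\mathcal{U}_2\mid\mathcal{P}$. Successful: of form $\checkmark\mid\mathcal{P}$; may-convergent: reduces to a successful process; must-convergent: every reachable process is may-convergent. $\mathrm{LOCKSIMPLE}_{k,IS}$ ($IS\in\{\Box,\blacksquare\}^k$, $\Box$ empty, $\blacksquare$ full): subprocesses are words over $\{P_1,T_1,\dots,P_k,T_k\}$ followed by $0$ or $\checkmark$; states $(\mathcal{P},C)$ reduce by $(P_i\mathcal{U}\mid\mathcal{P},C)\to(\mathcal{U}\mid\mathcal{P},C[C_i:=\blacksquare])$ only if $C_i=\Box$, and $(T_i\mathcal{U}\mid\mathcal{P},C)\to(\mathcal{U}\mid\mathcal{P},C[C_i:=\Box])$ always. Success = process contains $\checkmark$; a process $\mathcal{P}$ is may/must-convergent iff the state $(\mathcal{P},IS)$ is. A compositional translation $\tau$ is given by words $\tau(!),\tau(?)$ with $\tau(0)=0$,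 $\tau(\checkmark)=\checkmark$, $\tau(!\mathcal{U})=\tau(!)\tau(\mathcal{U})$, $\tau(?\mathcal{U})=\tau(?)\tau(\mathcal{U})$, $\tau$ commuting with $\mid$; correct = preserves and reflects may- and must-convergence. Blocking type of a word $S$: execute $S$ alone from $IS$; if it gets stuck at an occurrence of $P_i$ that is the first symbol from $\{P_i,T_i\}$ in $S$ the type is $P_i$, if stuck at a later occurrence of $P_i$ the type is $P_iP_i$; $\tau$ has blocking type $(W_1,W_2)$ if $\tau(!)$ has type $W_1$ and $\tau(?)$ type $W_2$. $T_j^+$ denotes nonempty words consisting only of $T_j$. *)

(* Defs.v *)
From mathcomp Require Import all_boot.
Set Implicit Arguments. Unset Strict Implicit. Unset Printing Implicit Defensive.

Inductive star (A : Type) (R : A -> A -> Prop) : A -> A -> Prop :=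
| star_refl x : star R x x
| star_step x y z : R x y -> star R y z -> star R x z.

(* subprocesses U ::= check | 0 | !U | ?U *)
Inductive ssub : Type :=
| SCheck : ssub
| SZero : ssub
| SSend : ssub -> ssub
| SRecv : ssub -> ssub.

(* A process is a finite parallel composition, represented as a list of
   subprocesses (order is irrelevant for the semantics below: a reduction
   rewrites two components in place, success looks for any component). *)
Definition sproc := seq ssub.

Definition sred (P Q : sproc) : Prop :=
  exists (A B C : sproc) (U1 U2 : ssub),
    (P = A ++ SSend U1 :: B ++ SRecv U2 :: C /\ Q = A ++ U1 :: B ++ U2 :: C)
    \/
    (P = A ++ SRecv U2 :: B ++ SSend U1 :: C /\ Q = A ++ U2 :: B ++ U1 :: C).

Definition ssuccess (P : sproc) : Prop :=
  exists A B : sproc, P = A ++ SCheck :: B.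

Definition smay (P : sproc) : Prop :=
  exists Q, star sred P Q /\ ssuccess Q.

Definition smust (P : sproc) : Prop :=
  forall Q, star sred P Q -> smay Q.

(* symbols P_i, T_i for i : 'I_k  (paper index i+1) *)
Inductive lsym (k : nat) : Type :=
| LP : 'I_k -> lsym k
| LT : 'I_k -> lsym k.

Definition lsym_idx k (s : lsym k) : 'I_k :=
  match s with LP i => i | LT i => i end.

(* a subprocess: a word followed by 0 (false) or check (true) *)
Definition lsub (k : nat) : Type := (seq (lsym k) * bool)%type.
Definition lproc (k : nat) : Type := seq (lsub k).
(* store: true = full (black square), false = empty (white square) *)
Definition store (k : nat) : Type := {ffun 'I_k -> bool}.

Definition upd k (C : store k) (i : 'I_k) (b : bool) : store k :=
  [ffun j => if j == i then b else C j].

Definition lstate (k : nat) : Type := (lproc k * store k)%type.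

Definition lred k (s s' : lstate k) : Prop :=
  exists (A B : lproc k) (w : seq (lsym k)) (e : bool) (i : 'I_k),
    ( s.1 = A ++ (LP i :: w, e) :: B /\ s.2 i = false /\
      s'.1 = A ++ (w, e) :: B /\ s'.2 = upd s.2 i true )
    \/
    ( s.1 = A ++ (LT i :: w, e) :: B /\
      s'.1 = A ++ (w, e) :: B /\ s'.2 = upd s.2 i false ).

Definition lsuccess k (s : lstate k) : Prop :=
  exists A B : lproc k, s.1 = A ++ ([::], true) :: B.

Definition lmay k (s : lstate k) : Prop :=
  exists s', star (@lred k) s s' /\ lsuccess s'.

Definition lmust k (s : lstate k) : Prop :=
  forall s', star (@lred k) s s' -> lmay s'.

(* Compositional translations, given by the words tau(!) and tau(?)    *)
Fixpoint tr_sub k (wS wR : seq (lsym k)) (U : ssub) : lsub k :=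
  match U with
  | SCheck => ([::], true)
  | SZero => ([::], false)
  | SSend U' => let r := tr_sub wS wR U' in (wS ++ r.1, r.2)
  | SRecv U' => let r := tr_sub wS wR U' in (wR ++ r.1, r.2)
  end.

Definition tr_proc k (wS wR : seq (lsym k)) (P : sproc) : lproc k :=
  map (tr_sub wS wR) P.

Definition correct_tr k (IS : store k) (wS wR : seq (lsym k)) : Prop :=
  forall P : sproc,
    (smay P <-> lmay (tr_proc wS wR P, IS)) /\
    (smust P <-> lmust (tr_proc wS wR P, IS)).

Inductive btype (k : nat) : Type :=
| BP : 'I_k -> btype k
| BPP : 'I_k -> btype k.

(* Execute word w alone from store C; [seen] is the already executed
   prefix.  Returns the blocking type if execution gets stuck, None if the
   word runs to completion. *)
Fixpoint block_run k (C : store k) (seen w : seq (lsym k)) : option (btype k) :=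
  match w with
  | [::] => None
  | LP i :: w' =>
      if C i then
        Some (if has (fun s => lsym_idx s == i) seen then BPP i else BP i)
      else block_run (upd C i true) (rcons seen (LP i)) w'
  | LT i :: w' => block_run (upd C i false) (rcons seen (LT i)) w'
  end.

Definition blocking_type k (IS : store k) (w : seq (lsym k)) : option (btype k) :=
  block_run IS [::] w.

(* The two locks of LOCKSIMPLE_2: paper's index 1 and 2 *)
Definition l1 : 'I_2 := @Ordinal 2 0 isT.
Definition l2 : 'I_2 := @Ordinal 2 1 isT.

Definition has_prefix_Tplus_T k (i j : 'I_k) (w : seq (lsym k)) : Prop :=
  exists (n : nat) (rest : seq (lsym k)),
    w = nseq n.+1 (LT i) ++ LT j :: rest.

(* Main.v *)
Require Import Defs.
From mathcomp Require Import all_boot.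
Set Implicit Arguments.

Lemma star_trans (A : Type) (R : A -> A -> Prop) x y z :
  star R x y -> star R y z -> star R x z.
Proof. by elim=> [//|a b c Hab _ IH] /IH; apply: star_step. Qed.

Lemma lmay_back k (s s' : lstate k) : star (@lred k) s s' -> lmay s' -> lmay s.
Proof. move=> H [t [Ht Hs]]; exists t; split=> //; exact: star_trans H Ht. Qed.

Lemma run_T k (a : 'I_k) n u e (A B : lproc k) C :
  exists C' : store k, C' a = false /\
  star (@lred k) (A ++ (nseq n.+1 (LT a) ++ u, e) :: B, C) (A ++ (u, e) :: B, C').
Proof.
elim: n C => [|n IH] C.
  exists (upd C a false); split; first by rewrite /upd ffunE eqxx.
  apply: star_step (star_refl _ _).
  exists A, B, u, e, a; right; split=> //.
have [C' [HC' Hs]] := IH (upd C a false).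
exists C'; split=> //; apply: star_step Hs.
exists A, B, (nseq n.+1 (LT a) ++ u), e, a; right; split=> //.
Qed.

Lemma helper_run k (a b : 'I_k) n rest (A B : lproc k) C :
  a != b ->
  exists C' : store k, C' a = false /\ C' b = false /\
  star (@lred k) (A ++ (nseq n.+1 (LT a) ++ LT b :: rest, false) :: B, C)
                 (A ++ (rest, false) :: B, C').
Proof.
move=> ab.
have [C1 [H1 Hs]] := run_T a n (LT b :: rest) false A B C.
exists (upd C1 b false); split; first by rewrite /upd ffunE (negbTE ab).
split; first by rewrite /upd ffunE eqxx.
apply: star_trans Hs _; apply: star_step (star_refl _ _).
exists A, B, rest, false, b; right; split=> //.
Qed.

Lemma nseqS_cat T (x : T) k (E : seq T) : nseq k.+1 x ++ E = nseq k x ++ x :: E.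
Proof. by by elim: k => [//|k IH] /=; rewrite -IH. Qed.

Lemma main_run k (a b : 'I_k) n rest :
  a != b ->
  (forall (C : store k) i, C a = false -> C b = false -> C i = false) ->
  forall w kk C E, size w <= kk ->
  lmay ((w, true) :: nseq kk (nseq n.+1 (LT a) ++ LT b :: rest, false) ++ E, C).
Proof.
move=> ab Hall; elim=> [|s w IH] kk C E Hk.
  exists (([::], true) :: nseq kk (nseq n.+1 (LT a) ++ LT b :: rest, false) ++ E, C).
  split; first exact: star_refl.
  by exists [::], (nseq kk (nseq n.+1 (LT a) ++ LT b :: rest, false) ++ E).
case: s Hk => i Hk.
- case: kk Hk => [//|kk] Hk.
  rewrite nseqS_cat.
  have [C' [Ha [Hb Hs]]] := @helper_run _ a b n rest
     ((LP i :: w, true) :: nseq kk (nseq n.+1 (LT a) ++ LT b :: rest, false)) E C ab.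
  apply: lmay_back Hs _.
  apply: (lmay_back (s' := ((w, true) :: nseq kk (nseq n.+1 (LT a) ++ LT b :: rest, false)
                              ++ (rest, false) :: E, upd C' i true))); last first.
    by apply: IH.
  apply: star_step (star_refl _ _).
  exists [::], (nseq kk (nseq n.+1 (LT a) ++ LT b :: rest, false) ++ (rest, false) :: E), w, true, i.
  left; split=> //; split; first exact: Hall.
  done.
- apply: (lmay_back (s' := ((w, true) :: nseq kk (nseq n.+1 (LT a) ++ LT b :: rest, false)
                              ++ E, upd C i false))); last first.
    by apply: IH; apply: leq_trans Hk.
  apply: star_step (star_refl _ _).
  exists [::], (nseq kk (nseq n.+1 (LT a) ++ LT b :: rest, false) ++ E), w, true, i.
  by right.
Qed.

Definition isSend (U : ssub) : bool := if U is SSend _ then true else false.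

Lemma no_smay (P : sproc) : all isSend P -> ~ smay P.
Proof.
move=> HP [Q [HQ [A [B HS]]]].
have EQ : Q = P.
  case: HQ HP => [//|x y z Hxy _] HP.
  case: Hxy => [A' [B' [C' [U1 [U2 [[Hx _]|[Hx _]]]]]]].
  - by move: HP; rewrite Hx all_cat /= all_cat /= !andbF.
  - by move: HP; rewrite Hx all_cat /= !andbF.
by move: HP; rewrite -EQ HS all_cat /= !andbF.
Qed.

Lemma all2 (C : store 2) i : C l1 = false -> C l2 = false -> C i = false.
Proof.
case: i => [[|[|//]] p] H1 H2.
- by have -> : Ordinal p = l1 by apply: val_inj.
- by have -> : Ordinal p = l2 by apply: val_inj.
Qed.

Lemma key (IS : store 2) wS wR a b :
  a != b ->
  (forall (C : store 2) i, C a = false -> C b = false -> C i = false) ->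
  correct_tr IS wS wR -> ~ has_prefix_Tplus_T a b wS.
Proof.
move=> ab Hall Hc [n [rest Hw]].
pose P := SSend SCheck :: nseq (size wS) (SSend SZero).
apply: (no_smay (P := P)); first by rewrite /P /= all_nseq /= orbT.
apply/(proj1 (Hc P)).
rewrite /tr_proc /P /= map_nseq /= !cats0.
have := @main_run 2 a b n rest ab Hall wS (size wS) IS [::] (leqnn _).
by rewrite cats0 -Hw.
Qed.

Theorem lemma5p3 (IS : store 2) (wS wR : seq (lsym 2)) :
  correct_tr IS wS wR ->
  blocking_type IS wS = Some (BPP l1) ->
  blocking_type IS wR = Some (BPP l2) ->
  ~ has_prefix_Tplus_T l1 l2 wS /\ ~ has_prefix_Tplus_T l2 l1 wS.
Proof.
move=> Hc _ _; split.
- by apply: (key (wR := wR)) => // C i H1 H2; apply: all2.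
- by apply: (key (wR := wR)) => // C i H1 H2; apply: all2.
Qed.
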